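(* Let $(G,X,\Gamma)$ be a $(\mu,\nu)$-path system group containing a $\delta$-constricting element $(g,A)$. There exist $\theta\ge1$ and an integer $M\in[1,\theta]$ such that for every $u\in G$ the following are equivalent: (I) $u\in E(g,A)$; (II) there exists $p\in\{-1,1\}$ with $ug^Mu^{-1}=g^{pM}$; (III) there exist $m,n\in\mathbb Z\setminus\{0\}$ with $ug^mu^{-1}=g^n$. Moreover, setting $E^+(g,A)=\{u\in G: ug^Mu^{-1}=g^M\}$, we have $[E(g,A):E^+(g,A)]\le2$.
   Context: A path is a rectifiable continuous map $\alpha\colon[a,b]\to X$ parametrised by arc length; it is a $(\kappa,\lambda)$-quasi-geodesic if $d(\alpha(t),\alpha(t'))\le|t-t'|\le\kappa d(\alpha(t),\alpha(t'))+\lambda$. A $(\mu,\nu)$-path system group $(G,X,\Gamma)$ is a group $G$ acting properly by isometries on a geodesic metric space $X$ together with a $G$-invariant collection $\Gamma$ of paths closed under subpaths, such that any two points are joined by an element of $\Gamma$ and every element is a $(\mu,\nu)$-quasi-geodesic. A map $\pi_A\colon X\to A$ is $\delta$-constricting if (CS1) $d(x,\pi_A(x))\le\delta$ for $x\in A$, and (CS2) for all $x,y\in X$ and $\gamma\in\Gamma$ joining them, if $d(\pi_A(x),\pi_A(y))>\delta$ then $\gamma$ meets $B_X(\pi_A(x),\delta)$ and $B_X(\pi_A(y),\delta)$. An element $g$ is $\delta$-constricting, written $(g,A)$, if it has infinite order and $A$ is a $\langle g\rangle$-invariant subset admitting a $\delta$-constricting map, on which $\langle g\rangle$ acts $\delta$-coboundedly.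 The elementary closure is $E(g,A)=\{u\in G: d_{Haus}(uA,A)<\infty\}$, $d_{Haus}$ denoting Hausdorff distance. *)

(* Defs.v *)
From Stdlib Require Import Reals Lra Lia ZArith List Sorting.Sorted.
Open Scope R_scope.

Record Group := {
  gcar :> Type;
  gmul : gcar -> gcar -> gcar;
  ginv : gcar -> gcar;
  gone : gcar;
  gmul_assoc : forall x y z, gmul x (gmul y z) = gmul (gmul x y) z;
  gmul_1l : forall x, gmul gone x = x;
  gmul_Vl : forall x, gmul (ginv x) x = gone
}.
Arguments gmul {_}.
Arguments ginv {_}.
Arguments gone {_}.

Fixpoint gpow_nat {G : Group} (x : G) (n : nat) : G :=
  match n with O => gone | S k => gmul x (gpow_nat x k) end.

Definition gpow {G : Group} (x : G) (n : Z) : G :=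
  match n with
  | Z0 => gone
  | Zpos p => gpow_nat x (Pos.to_nat p)
  | Zneg p => ginv (gpow_nat x (Pos.to_nat p))
  end.

Definition gconj {G : Group} (u x : G) : G := gmul (gmul u x) (ginv u).

Definition infinite_order {G : Group} (g : G) : Prop :=
  forall n : Z, n <> 0%Z -> gpow g n <> gone.

Record MetricSpace := {
  mcar :> Type;
  dist : mcar -> mcar -> R;
  mpoint : mcar;
  dist_eq0 : forall x y, dist x y = 0 <-> x = y;
  dist_sym : forall x y, dist x y = dist y x;
  dist_tri : forall x y z, dist x z <= dist x y + dist y z
}.
Arguments dist {_}.

Definition geodesic (X : MetricSpace) : Prop :=
  forall x y : X, exists c : R -> X,
    c 0 = x /\ c (dist x y) = y /\
    forall s t, 0 <= s <= dist x y -> 0 <= t <= dist x y ->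
      dist (c s) (c t) = Rabs (s - t).

Definition isometric_action (G : Group) (X : MetricSpace) (act : G -> X -> X) : Prop :=
  (forall x, act gone x = x) /\
  (forall g h x, act (gmul g h) x = act g (act h x)) /\
  (forall g x y, dist (act g x) (act g y) = dist x y).

Definition proper_action (G : Group) (X : MetricSpace) (act : G -> X -> X) : Prop :=
  forall (x : X) (r : R), exists l : list G,
    forall g : G, dist x (act g x) <= r -> In g l.

(** * Paths: a map defined (at least) on [pa, pb] *)
Record path (X : MetricSpace) := mkpath { pa : R; pb : R; pf : R -> X }.
Arguments mkpath {X}.
Arguments pa {X}.
Arguments pb {X}.
Arguments pf {X}.

Fixpoint chain_sum {X : MetricSpace} (f : R -> X) (t0 : R) (l : list R) : R :=
  match l with
  | nil => 0
  | t1 :: l' => dist (f t0) (f t1) + chain_sum f t1 l'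
  end.

Definition partition_sums {X : MetricSpace} (f : R -> X) (s t : R) : R -> Prop :=
  fun v => exists l : list R,
    Sorted Rle (s :: l ++ t :: nil) /\ v = chain_sum f s (l ++ t :: nil).

Definition length_is {X : MetricSpace} (f : R -> X) (s t L : R) : Prop :=
  is_lub (partition_sums f s t) L.

Definition continuous_on {X : MetricSpace} (f : R -> X) (a b : R) : Prop :=
  forall t, a <= t <= b -> forall e, 0 < e -> exists dl, 0 < dl /\
    forall t', a <= t' <= b -> Rabs (t' - t) < dl -> dist (f t) (f t') < e.

(** rectifiable continuous path parametrised by arc length *)
Definition is_path {X : MetricSpace} (al : path X) : Prop :=
  pa al <= pb al /\ continuous_on (pf al) (pa al) (pb al) /\
  forall s t, pa al <= s -> s <= t -> t <= pb al ->
    length_is (pf al) s t (t - s).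

Definition quasi_geodesic {X : MetricSpace} (kappa lambda : R) (al : path X) : Prop :=
  forall t t', pa al <= t <= pb al -> pa al <= t' <= pb al ->
    dist (pf al t) (pf al t') <= Rabs (t - t') /\
    Rabs (t - t') <= kappa * dist (pf al t) (pf al t') + lambda.

Definition joins {X : MetricSpace} (al : path X) (x y : X) : Prop :=
  pf al (pa al) = x /\ pf al (pb al) = y.

Definition translate {G : Group} {X : MetricSpace} (act : G -> X -> X) (g : G)
  (al : path X) : path X := mkpath (pa al) (pb al) (fun t => act g (pf al t)).

Definition path_system_group (G : Group) (X : MetricSpace) (act : G -> X -> X)
  (Gam : path X -> Prop) (mu nu : R) : Prop :=
  geodesic X /\ isometric_action G X act /\ proper_action G X act /\
  (forall al, Gam al -> is_path al) /\
  (forall g al, Gam al -> Gam (translate act g al)) /\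
  (forall al s t, Gam al -> pa al <= s -> s <= t -> t <= pb al ->
     Gam (mkpath s t (pf al))) /\
  (forall x y : X, exists al, Gam al /\ joins al x y) /\
  (forall al, Gam al -> quasi_geodesic mu nu al).

Definition meets_ball {X : MetricSpace} (al : path X) (p : X) (r : R) : Prop :=
  exists t, pa al <= t <= pb al /\ dist (pf al t) p <= r.

Definition constricting_map {X : MetricSpace} (Gam : path X -> Prop) (delta : R)
  (A : X -> Prop) (pi : X -> X) : Prop :=
  (forall x, A (pi x)) /\
  (forall x, A x -> dist x (pi x) <= delta) /\
  (forall x y al, Gam al -> joins al x y -> dist (pi x) (pi y) > delta ->
     meets_ball al (pi x) delta /\ meets_ball al (pi y) delta).

Definition constricting_element {G : Group} {X : MetricSpace} (act : G -> X -> X)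
  (Gam : path X -> Prop) (delta : R) (g : G) (A : X -> Prop) : Prop :=
  infinite_order g /\
  (forall n : Z, forall x, A x <-> A (act (gpow g n) x)) /\
  (exists pi, constricting_map Gam delta A pi) /\
  (forall x y, A x -> A y -> exists n : Z, dist (act (gpow g n) x) y <= delta).

(** finite Hausdorff distance between uA and A *)
Definition elementary_closure {G : Group} {X : MetricSpace} (act : G -> X -> X)
  (A : X -> Prop) (u : G) : Prop :=
  exists r : R,
    (forall x, A x -> exists y, A y /\ dist (act u x) y <= r) /\
    (forall y, A y -> exists x, A x /\ dist (act u x) y <= r).

(* Main.v *)
Require Import Defs.
From Stdlib Require Import Reals ZArith List.
Open Scope R_scope.
From Stdlib Require Import Lia Lra Classical IndefiniteDescription.
Import Defs.

Section Grp.
Variable G : Group.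
Implicit Types x y z w : G.

Lemma gmul_Vr x : gmul x (ginv x) = gone.
Proof.
  rewrite <- (gmul_1l G (gmul x (ginv x))).
  rewrite <- (gmul_Vl G (ginv x)) at 1.
  rewrite <- gmul_assoc. rewrite (gmul_assoc G (ginv x) x (ginv x)).
  rewrite gmul_Vl, gmul_1l. apply gmul_Vl.
Qed.

Lemma gmul_1r x : gmul x gone = x.
Proof. rewrite <- (gmul_Vl G x), gmul_assoc, gmul_Vr, gmul_1l; auto. Qed.

Lemma gmul_cancel_l x y z : gmul x y = gmul x z -> y = z.
Proof.
  intro H. rewrite <- (gmul_1l G y), <- (gmul_1l G z), <- (gmul_Vl G x),
   <- !gmul_assoc, H; auto.
Qed.

Lemma ginv_unique x y : gmul x y = gone -> ginv x = y.
Proof. intro H. apply (gmul_cancel_l x). rewrite gmul_Vr; auto. Qed.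

Lemma ginv_inv x : ginv (ginv x) = x.
Proof. apply ginv_unique. apply gmul_Vl. Qed.

Lemma ginv_mul x y : ginv (gmul x y) = gmul (ginv y) (ginv x).
Proof. apply ginv_unique. rewrite <- gmul_assoc, (gmul_assoc G y), gmul_Vr, gmul_1l, gmul_Vr; auto. Qed.

Lemma ginv_one : ginv (@gone G) = gone.
Proof. apply ginv_unique. apply gmul_1l. Qed.

Lemma gmul_KV x y : gmul (gmul x y) (ginv y) = x.
Proof. rewrite <- gmul_assoc, gmul_Vr, gmul_1r; auto. Qed.
Lemma gmul_VK x y : gmul (ginv x) (gmul x y) = y.
Proof. rewrite gmul_assoc, gmul_Vl, gmul_1l; auto. Qed.
Lemma gmul_KVl x y : gmul x (gmul (ginv x) y) = y.
Proof. rewrite gmul_assoc, gmul_Vr, gmul_1l; auto. Qed.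

Lemma gpow_nat_comm x n : gmul x (gpow_nat x n) = gmul (gpow_nat x n) x.
Proof.
  induction n; simpl. rewrite gmul_1l, gmul_1r; auto.
  rewrite <- gmul_assoc, <- IHn; auto.
Qed.

Lemma gpow_of_nat x n : gpow x (Z.of_nat n) = gpow_nat x n.
Proof. destruct n; simpl; auto. rewrite SuccNat2Pos.id_succ; auto. Qed.

Lemma gpow_opp x k : gpow x (- k) = ginv (gpow x k).
Proof. destruct k; simpl; auto. rewrite ginv_one; auto. rewrite ginv_inv; auto. Qed.

Lemma gpow_S x k : gpow x (Z.succ k) = gmul x (gpow x k).
Proof.
  destruct (Z_le_gt_dec 0 k).
  - replace k with (Z.of_nat (Z.to_nat k)) by lia.
    rewrite <- Nat2Z.inj_succ, !gpow_of_nat. simpl; auto.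
  - replace k with (- Z.of_nat (S (Z.to_nat (- k - 1))))%Z by lia.
    set (n := Z.to_nat (- k - 1)).
    replace (Z.succ (- Z.of_nat (S n)))%Z with (- Z.of_nat n)%Z by lia.
    rewrite !gpow_opp, !gpow_of_nat. simpl.
    rewrite gpow_nat_comm, ginv_mul, gmul_KVl; auto.
Qed.

Lemma gpow_P x k : gpow x (Z.pred k) = gmul (ginv x) (gpow x k).
Proof.
  rewrite <- (Z.succ_pred k) at 2. rewrite gpow_S, gmul_VK; auto.
Qed.

Lemma gpow_0 x : gpow x 0 = gone.
Proof. reflexivity. Qed.
Lemma gpow_1 x : gpow x 1 = x.
Proof. simpl. apply gmul_1r. Qed.

Lemma gpow_add x a b : gpow x (a + b) = gmul (gpow x a) (gpow x b).
Proof.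
  induction a using Z.peano_ind.
  - simpl. rewrite gmul_1l; auto.
  - replace (Z.succ a + b)%Z with (Z.succ (a + b)) by lia.
    rewrite !gpow_S, IHa, gmul_assoc; auto.
  - replace (Z.pred a + b)%Z with (Z.pred (a + b)) by lia.
    rewrite !gpow_P, IHa, gmul_assoc; auto.
Qed.

Lemma gpow_comm x a b : gmul (gpow x a) (gpow x b) = gmul (gpow x b) (gpow x a).
Proof. rewrite <- !gpow_add, Z.add_comm; auto. Qed.

Lemma gpow_mul x a b : gpow (gpow x a) b = gpow x (a * b).
Proof.
  induction b using Z.peano_ind.
  - rewrite Z.mul_0_r; auto.
  - rewrite gpow_S, IHb. replace (a * Z.succ b)%Z with (a + a * b)%Z by lia.
    rewrite gpow_add; auto.
  - rewrite gpow_P, IHb. replace (a * Z.pred b)%Z with (- a + a * b)%Z by lia.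
    rewrite gpow_add, gpow_opp; auto.
Qed.

Lemma gconj_mul w x y : gconj w (gmul x y) = gmul (gconj w x) (gconj w y).
Proof.
  unfold gconj. rewrite <- !gmul_assoc. rewrite (gmul_VK w). auto.
Qed.

Lemma gconj_one w : gconj w gone = gone.
Proof. unfold gconj. rewrite gmul_1r, gmul_Vr; auto. Qed.

Lemma gconj_inv w x : gconj w (ginv x) = ginv (gconj w x).
Proof.
  symmetry. apply ginv_unique. rewrite <- gconj_mul, gmul_Vr, gconj_one; auto.
Qed.

Lemma gconj_pow w x k : gconj w (gpow x k) = gpow (gconj w x) k.
Proof.
  induction k using Z.peano_ind.
  - apply gconj_one.
  - rewrite !gpow_S, gconj_mul, IHk; auto.
  - rewrite !gpow_P, gconj_mul, IHk, gconj_inv; auto.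
Qed.

Lemma gconj_comp w1 w2 x : gconj (gmul w1 w2) x = gconj w1 (gconj w2 x).
Proof.
  unfold gconj. rewrite ginv_mul. rewrite !gmul_assoc; auto.
Qed.

Lemma gconj_gpow x i k : gconj (gpow x i) (gpow x k) = gpow x k.
Proof. unfold gconj. rewrite gpow_comm, gmul_KV; auto. Qed.

Lemma gconj_one_l x : gconj gone x = x.
Proof. unfold gconj. rewrite ginv_one, gmul_1l, gmul_1r; auto. Qed.

Lemma gconj_inj w x y : gconj w x = gconj w y -> x = y.
Proof.
  unfold gconj. intro H.
  apply (f_equal (fun t => gmul (ginv w) (gmul t w))) in H.
  rewrite !(gmul_assoc G (ginv w)), !gmul_Vl, !gmul_1l in H.
  rewrite <- !gmul_assoc, !gmul_Vl, !gmul_1r in H. auto.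
Qed.

End Grp.

Lemma gpow_inj (G : Group) (g : G) a b :
  infinite_order g -> gpow g a = gpow g b -> a = b.
Proof.
  intros Hg H. destruct (Z.eq_dec (a - b) 0) as [E|E]; [lia|].
  exfalso. apply (Hg _ E).
  replace (a - b)%Z with (a + - b)%Z by lia.
  rewrite gpow_add, gpow_opp, H, gmul_Vr; auto.
Qed.

Lemma pigeon (T : Type) (f : nat -> T) (l : list T) :
  (forall i, (i <= length l)%nat -> In (f i) l) ->
  exists i j, (i < j <= length l)%nat /\ f i = f j.
Proof.
  intros H. apply NNPP. intro Hn.
  assert (ND : NoDup (map f (seq 0 (S (length l))))).
  { apply NoDup_map_NoDup_ForallPairs; [|apply seq_NoDup].
    intros a b Ha Hb Hab. apply in_seq in Ha, Hb.
    destruct (Nat.lt_trichotomy a b) as [?|[?|?]]; auto; exfalso; apply Hn.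
    - exists a, b; split; [lia|auto].
    - exists b, a; split; [lia|auto]. }
  assert (I : incl (map f (seq 0 (S (length l)))) l).
  { intros x Hx. apply in_map_iff in Hx. destruct Hx as [i [<- Hi]].
    apply in_seq in Hi. apply H. lia. }
  pose proof (NoDup_incl_length ND I). rewrite length_map, length_seq in H0. lia.
Qed.

Lemma dist_nonneg (X : MetricSpace) (x y : X) : 0 <= dist x y.
Proof.
  pose proof (dist_tri X x y x). rewrite (dist_sym X y x) in H.
  assert (dist x x = 0) by (apply dist_eq0; auto). lra.
Qed.

Lemma dist_self (X : MetricSpace) (x : X) : dist x x = 0.
Proof. apply dist_eq0; auto. Qed.

Section Act.
Variables (G : Group) (X : MetricSpace) (act : G -> X -> X).
Hypothesis Hact : isometric_action G X act.

Lemma act_one x : act gone x = x.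
Proof. apply Hact. Qed.
Lemma act_mul a b x : act (gmul a b) x = act a (act b x).
Proof. apply Hact. Qed.
Lemma act_dist a x y : dist (act a x) (act a y) = dist x y.
Proof. apply Hact. Qed.
Lemma act_VK a x : act (ginv a) (act a x) = x.
Proof. rewrite <- act_mul, gmul_Vl, act_one; auto. Qed.
Lemma act_KV a x : act a (act (ginv a) x) = x.
Proof. rewrite <- act_mul, gmul_Vr, act_one; auto. Qed.
Lemma act_dist_V a x y : dist (act a x) y = dist x (act (ginv a) y).
Proof. rewrite <- (act_dist (ginv a)), act_VK; auto. Qed.
End Act.

Lemma bounded_fin (f : Z -> R) (N : Z) :
  exists B, forall s, (0 <= s < N)%Z -> f s <= B.
Proof.
  assert (H : forall n : nat, exists B, forall s : nat, (s < n)%nat -> f (Z.of_nat s) <= B).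
  { induction n.
    - exists 0; intros; lia.
    - destruct IHn as [B HB]. exists (Rmax B (f (Z.of_nat n))). intros s Hs.
      destruct (Nat.eq_dec s n) as [->|Hne].
      + apply Rmax_r.
      + eapply Rle_trans; [apply HB; lia| apply Rmax_l]. }
  destruct (H (Z.to_nat N)) as [B HB]. exists B. intros s Hs.
  replace s with (Z.of_nat (Z.to_nat s)) by lia. apply HB. lia.
Qed.

Lemma divmod_abs (k m : Z) : m <> 0%Z ->
  exists q s, (0 <= s < Z.abs m)%Z /\ k = (m * q + s)%Z.
Proof.
  intro Hm. assert (Hp : (0 < Z.abs m)%Z) by lia.
  assert (Hne : Z.abs m <> 0%Z) by lia. pose proof (Z.div_mod k (Z.abs m) Hne).
  pose proof (Z.mod_pos_bound k (Z.abs m) Hp).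
  exists (Z.sgn m * (k / Z.abs m))%Z, (k mod Z.abs m)%Z. split; [lia|].
  set (q := (k / Z.abs m)%Z) in *. set (r := (k mod Z.abs m)%Z) in *.
  destruct (Z.lt_trichotomy m 0) as [?|[?|?]].
  - rewrite Z.sgn_neg by lia. rewrite Z.abs_neq in H by lia. nia.
  - lia.
  - rewrite Z.sgn_pos by lia. rewrite Z.abs_eq in H by lia. nia.
Qed.

Section Main.
Variables (G : Group) (X : MetricSpace) (act : G -> X -> X)
  (Gam : path X -> Prop) (mu nu delta : R) (g : G) (A : X -> Prop) (pi : X -> X).
Hypothesis HP : path_system_group G X act Gam mu nu.
Hypothesis Hinf : infinite_order g.
Hypothesis Hinv : forall n : Z, forall x, A x <-> A (act (gpow g n) x).
Hypothesis Hpi : constricting_map Gam delta A pi.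
Hypothesis Hcob : forall x y, A x -> A y -> exists n : Z, dist (act (gpow g n) x) y <= delta.

Let Hact : isometric_action G X act.
Proof. apply HP. Qed.

Definition x0 := pi (mpoint X).
Lemma A_x0 : A x0.
Proof. apply Hpi. Qed.

Definition III (u : G) := exists m n : Z, m <> 0%Z /\ n <> 0%Z /\
  gconj u (gpow g m) = gpow g n.
Definition EE (u : G) := elementary_closure act A u.

Lemma conj_comm (u x y : G) : gconj u x = y -> gmul u x = gmul y u.
Proof. unfold gconj. intros <-. rewrite <- gmul_assoc, gmul_Vl, gmul_1r. auto. Qed.

Lemma conj_powq u m n q : gconj u (gpow g m) = gpow g n ->
  gconj u (gpow g (m * q)) = gpow g (n * q).
Proof. intro H. rewrite <- !gpow_mul, gconj_pow, H. auto. Qed.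

Lemma act_conj u m n q y : gconj u (gpow g m) = gpow g n ->
  act u (act (gpow g (m * q)) y) = act (gpow g (n * q)) (act u y).
Proof.
  intro H. rewrite <- !act_mul by exact Hact.
  f_equal. apply conj_comm. apply conj_powq; auto.
Qed.

Lemma III_E u : III u -> EE u.
Proof.
  intros [m [n [Hm [Hn H]]]].
  destruct (bounded_fin (fun s => dist (act u (act (gpow g s) x0)) x0) (Z.abs m)) as [B1 HB1].
  destruct (bounded_fin (fun s => dist (act u x0) (act (gpow g s) x0)) (Z.abs n)) as [B2 HB2].
  exists (delta + B1 + B2).
  assert (0 <= B1).
  { eapply Rle_trans; [apply dist_nonneg| apply (HB1 0%Z); split; [lia|apply Z.abs_pos; auto]]. }
  assert (0 <= B2).
  { eapply Rle_trans; [apply dist_nonneg| apply (HB2 0%Z); split; [lia|apply Z.abs_pos; auto]]. }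
  split.
  - intros x Ax. destruct (Hcob x0 x A_x0 Ax) as [k Hk].
    destruct (divmod_abs k m Hm) as [q [s [Hs ->]]].
    exists (act (gpow g (n * q)) x0). split; [apply Hinv, A_x0|].
    eapply Rle_trans; [apply (dist_tri X _ (act u (act (gpow g (m * q + s)) x0)))|].
    rewrite act_dist by exact Hact. rewrite dist_sym.
    rewrite gpow_add, act_mul by exact Hact. rewrite act_conj with (n := n) by auto.
    rewrite act_dist by exact Hact. specialize (HB1 s Hs). simpl in HB1. rewrite gpow_add, act_mul in Hk by exact Hact. lra.
  - intros y Ay. destruct (Hcob x0 y A_x0 Ay) as [k Hk].
    destruct (divmod_abs k n Hn) as [q [s [Hs ->]]].
    exists (act (gpow g (m * q)) x0). split; [apply Hinv, A_x0|].
    eapply Rle_trans; [apply (dist_tri X _ (act (gpow g (n * q + s)) x0))|].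
    rewrite act_conj with (n := n) by auto.
    rewrite gpow_add, act_mul by exact Hact.
    rewrite act_dist by exact Hact. specialize (HB2 s Hs). simpl in HB2. rewrite gpow_add, act_mul in Hk by exact Hact. lra.
Qed.

End Main.

Section Main2.
Variables (G : Group) (X : MetricSpace) (act : G -> X -> X)
  (Gam : path X -> Prop) (mu nu delta : R) (g : G) (A : X -> Prop) (pi : X -> X).
Hypothesis HP : path_system_group G X act Gam mu nu.
Hypothesis Hinf : infinite_order g.
Hypothesis Hinv : forall n : Z, forall x, A x <-> A (act (gpow g n) x).
Hypothesis Hpi : constricting_map Gam delta A pi.
Hypothesis Hcob : forall x y, A x -> A y -> exists n : Z, dist (act (gpow g n) x) y <= delta.

Let Hact : isometric_action G X act.
Proof. apply HP. Qed.
Let Hprop : proper_action G X act.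
Proof. apply HP. Qed.

Lemma alg1 (a b : Z) (x y : G) :
  gmul (gpow g (- a)) x = gmul (gpow g (- b)) y -> gmul y (ginv x) = gpow g (b - a).
Proof.
  intro H. apply (f_equal (gmul (gpow g b))) in H.
  rewrite !gmul_assoc, <- !gpow_add in H.
  replace (b + - b)%Z with 0%Z in H by lia. rewrite gpow_0, gmul_1l in H.
  replace (b - a)%Z with (b + - a)%Z by lia. rewrite <- H, gmul_KV. reflexivity.
Qed.

Lemma E_III u : EE G X act A u -> III G g u.
Proof.
  intros [r [C1 C2]].
  set (x0' := x0 X pi).
  assert (A0 : A x0') by (apply Hpi).
  destruct (C2 x0' A0) as [x1 [A1 Hx1]].
  assert (Hj : forall k : nat, exists j : Z,
    dist (act (gpow g j) x0') (act u (act (gpow g (Z.of_nat k)) x1)) <= r + delta).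
  { intro k. assert (Ak : A (act (gpow g (Z.of_nat k)) x1)) by (apply Hinv; auto).
    destruct (C1 _ Ak) as [y [Ay Hy]]. destruct (Hcob x0' y A0 Ay) as [j Hj].
    exists j. pose proof (dist_tri X (act (gpow g j) x0') y (act u (act (gpow g (Z.of_nat k)) x1))).
    rewrite (dist_sym X y) in H. lra. }
  apply functional_choice in Hj. destruct Hj as [jf Hjf].
  set (h := fun k : nat => gmul (gpow g (- jf k)) (gconj u (gpow g (Z.of_nat k)))).
  destruct (Hprop x0' (r + delta + r)) as [l Hl].
  destruct (pigeon G h l) as [i [j [Hij Heq]]].
  { intros i _. apply Hl. unfold h.
    rewrite act_mul by exact Hact. unfold gconj. rewrite !act_mul by exact Hact.
    rewrite dist_sym, (act_dist_V _ _ _ Hact (gpow g (- jf i))), gpow_opp, ginv_inv.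
    eapply Rle_trans; [apply (dist_tri X _ (act u (act (gpow g (Z.of_nat i)) x1)))|].
    rewrite !act_dist by exact Hact. rewrite (dist_sym X _ (act (gpow g (jf i)) x0')).
    rewrite (act_dist_V _ _ _ Hact (ginv u)), ginv_inv, (dist_sym X x0').
    specialize (Hjf i). lra. }
  unfold h in Heq. apply alg1 in Heq.
  rewrite <- gconj_inv, <- gconj_mul, <- gpow_opp, <- gpow_add in Heq.
  exists (Z.of_nat j + - Z.of_nat i)%Z, (jf j - jf i)%Z. split; [lia|]. split; auto.
  intro E0. rewrite E0, gpow_0 in Heq. rewrite <- (gconj_one G u) in Heq.
  apply gconj_inj in Heq. apply (Hinf _ (ltac:(lia) : (Z.of_nat j + - Z.of_nat i)%Z <> 0%Z)). auto.
Qed.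

End Main2.

Section Geo.
Variables (G : Group) (X : MetricSpace) (act : G -> X -> X)
  (Gam : path X -> Prop) (mu nu delta : R) (g : G) (A : X -> Prop) (pi : X -> X).
Hypothesis HP : path_system_group G X act Gam mu nu.
Hypothesis Hinf : infinite_order g.
Hypothesis Hinv : forall n : Z, forall x, A x <-> A (act (gpow g n) x).
Hypothesis Hpi : constricting_map Gam delta A pi.
Hypothesis Hcob : forall x y, A x -> A y -> exists n : Z, dist (act (gpow g n) x) y <= delta.

Let Hact : isometric_action G X act.
Proof. apply HP. Qed.
Let Hprop : proper_action G X act.
Proof. apply HP. Qed.
Let Htrans : forall g al, Gam al -> Gam (translate act g al).
Proof. apply HP. Qed.
Let Hsub : forall al s t, Gam al -> pa al <= s -> s <= t -> t <= pb al ->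
     Gam (mkpath s t (pf al)).
Proof. apply HP. Qed.
Let Hjoin : forall x y : X, exists al, Gam al /\ joins al x y.
Proof. apply HP. Qed.
Let Hqg : forall al, Gam al -> quasi_geodesic mu nu al.
Proof. apply HP. Qed.
Let HA : forall x, A (pi x).
Proof. apply Hpi. Qed.
Let HCS1 : forall x, A x -> dist x (pi x) <= delta.
Proof. apply Hpi. Qed.
Let HCS2 : forall x y al, Gam al -> joins al x y -> dist (pi x) (pi y) > delta ->
     meets_ball al (pi x) delta /\ meets_ball al (pi y) delta.
Proof. apply Hpi. Qed.

Lemma delta_nn : 0 <= delta.
Proof. eapply Rle_trans; [apply dist_nonneg| apply (HCS1 (pi (mpoint X))); auto]. Qed.

Lemma mu_bound d r : 0 <= d -> d <= r -> mu * d <= Rabs mu * r.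
Proof.
  intros. pose proof (Rle_abs mu). pose proof (Rabs_pos mu). nra.
Qed.

Lemma proj_bound y a r : A a -> dist y a <= r ->
  dist y (pi y) <= r + 3 * delta + Rabs mu * r + Rabs nu.
Proof.
  intros Aa Hya. pose proof delta_nn. pose proof (dist_nonneg X y a).
  pose proof (Rle_abs nu). pose proof (Rabs_pos mu). pose proof (Rabs_pos nu).
  assert (0 <= r) by lra.
  destruct (Rle_or_lt (dist (pi y) (pi a)) delta) as [Hle|Hgt].
  - pose proof (HCS1 a Aa).
    pose proof (dist_tri X y a (pi y)). pose proof (dist_tri X a (pi a) (pi y)).
    rewrite (dist_sym X (pi a) (pi y)) in *. nra.
  - destruct (Hjoin y a) as [al [Gal [J1 J2]]].
    destruct (HCS2 y a al Gal (conj J1 J2) Hgt) as [[t [Ht Hd]] _].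
    assert (Hab : pa al <= pb al) by lra.
    destruct (Hqg al Gal t (pa al) Ht (conj (Rle_refl _) Hab)) as [Q1 _].
    destruct (Hqg al Gal (pa al) (pb al) (conj (Rle_refl _) Hab) (conj Hab (Rle_refl _))) as [_ Q2].
    rewrite J1, J2 in *. rewrite Rabs_right in Q1 by lra. rewrite Rabs_left1 in Q2 by lra.
    pose proof (mu_bound _ _ H0 Hya) as MB.
    pose proof (dist_tri X y (pf al t) (pi y)) as TR. rewrite (dist_sym X y (pf al t)) in TR. lra.
Qed.

Lemma far_power (K : R) : exists k : Z, dist (x0 X pi) (act (gpow g k) (x0 X pi)) > K.
Proof.
  apply NNPP. intro Hn.
  destruct (Hprop (x0 X pi) K) as [l Hl].
  destruct (pigeon G (fun i => gpow g (Z.of_nat i)) l) as [i [j [Hij Heq]]].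
  { intros i _. apply Hl. apply Rnot_lt_le. intro. apply Hn. eexists; eauto. }
  apply gpow_inj in Heq; auto. lia.
Qed.

Definition pi' (u : G) (x : X) := act u (pi (act (ginv u) x)).

Lemma CS1' u a : A a -> dist (act u a) (pi' u (act u a)) <= delta.
Proof. intro Aa. unfold pi'. rewrite act_VK, act_dist by exact Hact. auto. Qed.

Lemma CS2' u x y al : Gam al -> joins al x y -> dist (pi' u x) (pi' u y) > delta ->
  meets_ball al (pi' u x) delta /\ meets_ball al (pi' u y) delta.
Proof.
  intros Gal [J1 J2] Hd. unfold pi' in *. rewrite act_dist in Hd by exact Hact.
  assert (J : joins (translate act (ginv u) al) (act (ginv u) x) (act (ginv u) y)).
  { unfold joins, translate; simpl. rewrite J1, J2. auto. }
  destruct (HCS2 _ _ _ (Htrans (ginv u) al Gal) J Hd) as [[t1 [T1 D1]] [t2 [T2 D2]]].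
  simpl in *. split.
  - exists t1. split; auto. rewrite act_dist_V, ginv_inv in D1 by exact Hact.
    auto.
  - exists t2. split; auto. rewrite act_dist_V, ginv_inv in D2 by exact Hact.
    auto.
Qed.

Definition D2 := 5 * delta + 4 * Rabs mu * delta + Rabs nu.

Lemma geo u : EE G X act A u -> exists i j : Z,
  dist (x0 X pi) (act (gmul (gmul (gpow g (- i)) u) (gpow g j)) (x0 X pi)) <= D2.
Proof.
  intros [r [C1 _]].
  set (x := x0 X pi). assert (Ax : A x) by apply HA.
  pose proof delta_nn as Hd0. pose proof (Rabs_pos mu). pose proof (Rabs_pos nu).
  pose proof (Rle_abs nu).
  set (R1 := r + 3 * delta + Rabs mu * r + Rabs nu).
  assert (HR1 : forall a, A a -> dist (act u a) (pi (act u a)) <= R1).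
  { intros a Aa. destruct (C1 a Aa) as [a' [Aa' Ha']]. eapply proj_bound; eauto. }
  destruct (far_power (2 * R1 + delta)) as [k Hk]. fold x in Hk.
  set (b := act u x). set (y := act u (act (gpow g k) x)).
  assert (Ay : A (act (gpow g k) x)) by (apply Hinv; auto).
  assert (Hby : dist b y > 2 * R1 + delta) by (unfold b, y; rewrite act_dist by exact Hact; auto).
  assert (Hp : dist (pi b) (pi y) > delta).
  { pose proof (HR1 x Ax). pose proof (HR1 _ Ay). fold b y in H2, H3.
    pose proof (dist_tri X b (pi b) y). pose proof (dist_tri X (pi b) (pi y) y).
    rewrite (dist_sym X (pi y) y) in H5. lra. }
  destruct (Hjoin b y) as [al [Gal [J1 J2]]].
  destruct (HCS2 b y al Gal (conj J1 J2) Hp) as [[t0 [T0 Hz]] _].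
  set (z := pf al t0) in *.
  set (w := pi' u z).
  assert (Hab : pa al <= pb al) by lra.
  assert (Hbb : dist b (pi' u b) <= delta) by (apply CS1'; auto).
  assert (Hyy : dist y (pi' u y) <= delta) by (apply CS1'; auto).
  assert (L : exists t1, pa al <= t1 <= t0 /\ dist (pf al t1) w <= 2 * delta).
  { destruct (Rle_or_lt (dist (pi' u b) w) delta) as [Hle|Hgt].
    - exists (pa al). split; [lra|]. rewrite J1.
      pose proof (dist_tri X b (pi' u b) w). lra.
    - assert (G1 : Gam (mkpath (pa al) t0 (pf al))) by (apply Hsub; [exact Gal|lra|lra|lra]).
      assert (JJ : joins (mkpath (pa al) t0 (pf al)) b z) by (split; simpl; auto).
      destruct (CS2' u _ _ _ G1 JJ Hgt) as [_ [t1 [T1 D1]]].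
      simpl in T1, D1. exists t1. split; [lra|]. fold w in D1. lra. }
  assert (Rt : exists t2, t0 <= t2 <= pb al /\ dist (pf al t2) w <= 2 * delta).
  { destruct (Rle_or_lt (dist w (pi' u y)) delta) as [Hle|Hgt].
    - exists (pb al). split; [lra|]. rewrite J2.
      pose proof (dist_tri X y (pi' u y) w). rewrite (dist_sym X (pi' u y) w) in H2. lra.
    - assert (G2 : Gam (mkpath t0 (pb al) (pf al))) by (apply Hsub; [exact Gal|lra|lra|lra]).
      assert (JJ : joins (mkpath t0 (pb al) (pf al)) z y) by (split; simpl; auto).
      destruct (CS2' u _ _ _ G2 JJ Hgt) as [[t2 [T2 D2']] _].
      simpl in T2, D2'. exists t2. split; [lra|]. fold w in D2'. lra. }
  destruct L as [t1 [T1 D1]]. destruct Rt as [t2 [T2 D2']].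
  destruct (Hqg al Gal t0 t1 T0 (conj (proj1 T1) (Rle_trans _ _ _ (proj2 T1) (proj2 T0)))) as [Q1 _].
  destruct (Hqg al Gal t1 t2 (conj (proj1 T1) (Rle_trans _ _ _ (proj2 T1) (Rle_trans _ _ _ (proj1 T2) (proj2 T2))))
    (conj (Rle_trans _ _ _ (proj1 T0) (proj1 T2)) (proj2 T2))) as [_ Q2].
  rewrite Rabs_right in Q1 by lra. rewrite Rabs_left1 in Q2 by lra.
  assert (D12 : dist (pf al t1) (pf al t2) <= 4 * delta).
  { pose proof (dist_tri X (pf al t1) w (pf al t2)). rewrite (dist_sym X w) in H2. lra. }
  pose proof (mu_bound _ _ (dist_nonneg X _ _) D12).
  assert (Hzw : dist z w <= 2 * delta + Rabs mu * (4 * delta) + Rabs nu).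
  { pose proof (dist_tri X z (pf al t1) w). fold z in Q1. lra. }
  set (a1 := pi (act (ginv u) z)).
  assert (Hw : w = act u a1) by reflexivity.
  destruct (Hcob x a1 Ax (HA _)) as [j Hj].
  destruct (Hcob x (pi b) Ax (HA _)) as [i Hi].
  exists i, j.
  rewrite !act_mul by exact Hact.
  rewrite dist_sym, act_dist_V, gpow_opp, ginv_inv by exact Hact.
  unfold D2.
  pose proof (dist_tri X (act u (act (gpow g j) x)) (act u a1) (act (gpow g i) x)).
  pose proof (dist_tri X (act u a1) (pi b) (act (gpow g i) x)).
  pose proof (dist_tri X (act u a1) z (pi b)).
  rewrite act_dist in H3 by exact Hact. rewrite <- Hw in H5.
  rewrite (dist_sym X (pi b)) in H4. rewrite (dist_sym X w z) in H5.
  rewrite (dist_sym X (act u a1)), <- Hw in H4.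
  rewrite <- Hw in H3. rewrite (dist_sym X w (act (gpow g i) x)) in H3. lra.
Qed.

End Geo.

Section Fin.
Variables (G : Group) (g : G).
Hypothesis Hinf : infinite_order g.

Definition transfer (v u : G) := forall a b : Z,
  gconj v (gpow g a) = gpow g b -> gconj u (gpow g a) = gpow g b.

Lemma conj_powq' u m n q : gconj u (gpow g m) = gpow g n ->
  gconj u (gpow g (m * q)) = gpow g (n * q).
Proof. intro H. rewrite <- !gpow_mul, gconj_pow, H. auto. Qed.

Lemma conj_fun u a b b' : gconj u (gpow g a) = gpow g b -> gconj u (gpow g a) = gpow g b' -> b = b'.
Proof. intros H1 H2. rewrite H1 in H2. apply gpow_inj in H2; auto. Qed.

Lemma III_pow u m n k : gconj u (gpow g m) = gpow g n ->
  gconj (gpow_nat u k) (gpow g (m ^ Z.of_nat k)) = gpow g (n ^ Z.of_nat k).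
Proof.
  intro H. induction k.
  - simpl. rewrite gconj_one_l. auto.
  - rewrite Nat2Z.inj_succ, !Z.pow_succ_r by lia. simpl gpow_nat.
    rewrite gconj_comp. rewrite (Z.mul_comm m), conj_powq' with (n := (n ^ Z.of_nat k)%Z) by auto.
    rewrite Z.mul_comm, conj_powq' with (n := n) by auto. try (f_equal; lia).
Qed.

Lemma sign_lemma (F : list G) :
  (forall u, III G g u -> exists v, In v F /\ III G g v /\ transfer v u) ->
  forall u, III G g u -> exists m, m <> 0%Z /\
    (gconj u (gpow g m) = gpow g m \/ gconj u (gpow g m) = gpow g (- m)).
Proof.
  intros Hdec u [m [n [Hm [Hn H]]]].
  assert (Hk : forall k : nat, exists v, In v F /\ III G g v /\ transfer v (gpow_nat u k)).
  { intro k. apply Hdec. exists (m ^ Z.of_nat k)%Z, (n ^ Z.of_nat k)%Z.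
    split; [apply Z.pow_nonzero; lia|]. split; [apply Z.pow_nonzero; lia|].
    apply III_pow; auto. }
  apply functional_choice in Hk. destruct Hk as [vf Hvf].
  destruct (pigeon G vf F) as [i [j [Hij Heq]]].
  { intros i _. apply Hvf. }
  destruct (Hvf i) as [_ [[a [b [Ha [Hb Hab]]]] Ti]].
  destruct (Hvf j) as [_ [_ Tj]]. rewrite <- Heq in Tj.
  assert (key : forall k, (b * m ^ Z.of_nat k = n ^ Z.of_nat k * a)%Z ->
     True) by auto.
  assert (E : forall k : nat, transfer (vf i) (gpow_nat u k) ->
      (b * m ^ Z.of_nat k = n ^ Z.of_nat k * a)%Z).
  { intros k T. apply (conj_fun (gpow_nat u k) (a * m ^ Z.of_nat k)).
    - apply T. apply conj_powq'; auto.
    - rewrite Z.mul_comm. apply conj_powq'. apply III_pow; auto. }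
  pose proof (E i Ti) as Ei. pose proof (E j Tj) as Ej.
  set (s := (j - i)%nat).
  assert (Hs : (0 < Z.of_nat s)%Z) by lia.
  replace (Z.of_nat j) with (Z.of_nat i + Z.of_nat s)%Z in Ej by lia.
  rewrite !Z.pow_add_r in Ej by lia.
  assert (Hni : (n ^ Z.of_nat i <> 0)%Z) by (apply Z.pow_nonzero; lia).
  assert (Hpow : (m ^ Z.of_nat s = n ^ Z.of_nat s)%Z).
  { assert ((n ^ Z.of_nat i * a * m ^ Z.of_nat s = n ^ Z.of_nat i * a * n ^ Z.of_nat s)%Z).
    { transitivity (b * (m ^ Z.of_nat i * m ^ Z.of_nat s))%Z.
      - rewrite Z.mul_assoc, Ei. ring.
      - rewrite Ej. ring. }
    apply Z.mul_reg_l in H0; auto. apply Z.neq_mul_0; auto. }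
  assert (Habs : Z.abs m = Z.abs n).
  { apply (Z.pow_inj_l _ _ (Z.of_nat s)); try lia. rewrite <- !Z.abs_pow, Hpow. auto. }
  exists m. split; auto.
  destruct (Z.abs_eq_or_opp m), (Z.abs_eq_or_opp n); rewrite H; [left|right|right|left]; f_equal; lia.
Qed.

Lemma list_M (l : list G) :
  (forall u, III G g u -> exists m, m <> 0%Z /\
    (gconj u (gpow g m) = gpow g m \/ gconj u (gpow g m) = gpow g (- m))) ->
  exists M : Z, (1 <= M)%Z /\
  forall v, In v l -> III G g v ->
    gconj v (gpow g M) = gpow g M \/ gconj v (gpow g M) = gpow g (- M).
Proof.
  intro Hsg.
  induction l as [|v l IH].
  - exists 1%Z. split; [lia|]. intros v [].
  - destruct IH as [M' [HM' IH]].
    destruct (classic (III G g v)) as [Hv3|Hn].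
    + destruct (Hsg v Hv3) as [m [Hm Hv]].
      exists (M' * Z.abs m)%Z. split; [nia|].
      intros w [<-|Hw] IIIw.
      * replace (M' * Z.abs m)%Z with (m * (Z.sgn m * M'))%Z.
        2:{ destruct (Z.lt_trichotomy m 0) as [Hl|[Hl|Hl]].
            - rewrite Z.sgn_neg, Z.abs_neq by lia. ring.
            - lia.
            - rewrite Z.sgn_pos, Z.abs_eq by lia. ring. }
        destruct Hv as [Hv1|Hv1]; [left|right]; rewrite (conj_powq' _ _ _ _ Hv1); f_equal; lia.
      * destruct (IH w Hw IIIw) as [Hv1|Hv1]; [left|right]; rewrite (conj_powq' _ _ _ _ Hv1); f_equal; lia.
    + exists M'. split; auto. intros w [<-|Hw] IIIw; [contradiction|auto].
Qed.
End Fin.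

Theorem mainTheorem16 (G : Group) (X : MetricSpace) (act : G -> X -> X)
  (Gam : path X -> Prop) (mu nu delta : R) (g : G) (A : X -> Prop) :
  path_system_group G X act Gam mu nu ->
  constricting_element act Gam delta g A ->
  exists (theta : R) (M : Z),
    1 <= theta /\ (1 <= M)%Z /\ IZR M <= theta /\
    (forall u : G,
       (elementary_closure act A u <->
          exists p : Z, (p = 1%Z \/ p = (-1)%Z) /\
            gconj u (gpow g M) = gpow g (p * M)) /\
       (elementary_closure act A u <->
          exists m n : Z, m <> 0%Z /\ n <> 0%Z /\
            gconj u (gpow g m) = gpow g n)) /\
    (exists a b : G,
       elementary_closure act A a /\ elementary_closure act A b /\
       forall u : G, elementary_closure act A u ->
         gconj (gmul (ginv a) u) (gpow g M) = gpow g M \/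
         gconj (gmul (ginv b) u) (gpow g M) = gpow g M).
Proof.
  intros HP [Hinf [Hinv [[pi Hpi] Hcob]]].
  assert (Hact : isometric_action G X act) by apply HP.
  destruct (proj1 (proj2 (proj2 HP)) (x0 X pi) (D2 mu nu delta)) as [F HF].
  assert (Hdec : forall u, III G g u -> exists v, In v F /\ III G g v /\ transfer G g v u).
  { intros u [m [n [Hm [Hn Hu]]]].
    assert (Eu : EE G X act A u) by (eapply III_E; eauto; exists m, n; auto).
    destruct (geo G X act Gam mu nu delta g A pi HP Hinf Hinv Hpi Hcob u Eu) as [i [j Hij]].
    set (v := gmul (gmul (gpow g (- i)) u) (gpow g j)) in *.
    exists v. split; [apply HF; auto|]. split.
    - exists m, n. split; auto. split; auto. unfold v.
      rewrite !gconj_comp, gconj_gpow, Hu, gconj_gpow. auto.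
    - intros a b Hab.
      assert (Ev : gmul (gmul (gpow g i) v) (gpow g (- j)) = u).
      { unfold v. rewrite (gpow_opp G g j), (gmul_assoc G (gpow g i)), gmul_KV, (gpow_opp G g i), gmul_KVl. auto. }
      rewrite <- Ev, !gconj_comp, gconj_gpow, Hab, gconj_gpow. auto. }
  assert (Hsg := sign_lemma G g Hinf F Hdec).
  destruct (list_M G g F Hsg) as [M [HM HMF]].
  assert (HII : forall u, III G g u ->
     gconj u (gpow g M) = gpow g M \/ gconj u (gpow g M) = gpow g (- M)).
  { intros u Hu. destruct (Hdec u Hu) as [v [Fv [IIIv Tv]]].
    destruct (HMF v Fv IIIv) as [H|H]; [left|right]; apply Tv; auto. }
  assert (EIII : forall u, elementary_closure act A u <-> III G g u).
  { intro u. split; intro H.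
    - eapply E_III; eauto.
    - eapply III_E; eauto. }
  assert (EII : forall u, elementary_closure act A u <->
          exists p : Z, (p = 1%Z \/ p = (-1)%Z) /\ gconj u (gpow g M) = gpow g (p * M)).
  { intro u. rewrite EIII. split.
    - intro H. destruct (HII u H) as [H1|H1].
      + exists 1%Z. split; auto. rewrite Z.mul_1_l. auto.
      + exists (-1)%Z. split; [auto|]. rewrite H1. try (f_equal; lia).
    - intros [p [Hp H]]. exists M, (p * M)%Z. split; [lia|]. split; [destruct Hp; subst; lia|]. auto. }
  exists (IZR M), M. split; [apply IZR_le in HM; auto|]. split; auto. split; [lra|].
  split.
  - intro u. split; [apply EII|apply EIII].
  - assert (E1 : elementary_closure act A gone).
    { apply EIII. exists 1%Z, 1%Z. split; [lia|]. split; [lia|]. apply gconj_one_l. }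
    destruct (classic (exists b, elementary_closure act A b /\ gconj b (gpow g M) = gpow g (- M)))
      as [[b [Eb Hb]]|Hn].
    + exists gone, b. split; auto. split; auto. intros u Eu.
      destruct (HII u (proj1 (EIII u) Eu)) as [H|H].
      * left. rewrite ginv_one, gmul_1l. auto.
      * right. rewrite gconj_comp, H.
        rewrite <- Hb, <- gconj_comp, gmul_Vl, gconj_one_l. auto.
    + exists gone, gone. split; auto. split; auto. intros u Eu.
      rewrite ginv_one, gmul_1l.
      destruct (HII u (proj1 (EIII u) Eu)) as [H|H]; [left; auto|].
      exfalso. apply Hn. exists u. split; auto.
Qed.
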